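(* Let $A$ be an Archimedean semiprime $f$-algebra which is relatively uniformly complete. Then $A$ is bounded quasi-inversion closed, i.e., for every $a\in A$ with $|a|\le|a^2-a|$ there exists $a^\ast\in A$ with $a+a^\ast=aa^\ast$.
   Context: An $f$-algebra is a real associative algebra that is a vector lattice with $A_+A_+\subseteq A_+$ and such that $a\wedge b=0$ implies $ac\wedge b=ca\wedge b=0$ for all $c\in A_+$; it is semiprime if $0$ is its only nilpotent element. Relative uniform completeness is the standard notion for vector lattices. *)

(* Defs.v *)
From HB Require Import structures.
From mathcomp Require Import all_boot all_order all_algebra.
From mathcomp Require Import reals.
Set Implicit Arguments. Unset Strict Implicit. Unset Printing Implicit Defensive.
Import Order.TTheory GRing.Theory Num.Theory.
Local Open Scope ring_scope.

Section FAlgebra.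
Variables (R : realType) (V : lmodType R).
(* A (not necessarily unital) real algebra structure on the real vector
   space V is given by a multiplication [mul]; the vector-lattice structure
   by a partial order [le] and the supremum operation [join]. *)
Variables (mul : V -> V -> V) (le : V -> V -> Prop) (join : V -> V -> V).

Definition meet (x y : V) : V := - join (- x) (- y).
Definition absv (x : V) : V := join x (- x).

Definition is_real_algebra : Prop :=
  [/\ forall x y z, mul x (mul y z) = mul (mul x y) z,
      forall x y z, mul (x + y) z = mul x z + mul y z,
      forall x y z, mul x (y + z) = mul x y + mul x z,
      forall (c : R) x y, mul (c *: x) y = c *: mul x y
    & forall (c : R) x y, mul x (c *: y) = c *: mul x y].

Definition is_vector_lattice : Prop :=
  [/\ [/\ (forall x, le x x),
          (forall x y, le x y -> le y x -> x = y)
        & (forall x y z, le x y -> le y z -> le x z)],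
      (forall x y z, le x y -> le (x + z) (y + z)),
      (forall (c : R) x y, 0 <= c -> le x y -> le (c *: x) (c *: y))
    & forall x y, [/\ le x (join x y), le y (join x y)
                    & forall z, le x z -> le y z -> le (join x y) z]].

Definition is_f_algebra : Prop :=
  [/\ is_real_algebra, is_vector_lattice,
      (forall a b, le 0 a -> le 0 b -> le 0 (mul a b))
    & forall a b c, meet a b = 0 -> le 0 c ->
        meet (mul a c) b = 0 /\ meet (mul c a) b = 0].

(* positive powers: pow a n = a^(n+1) *)
Fixpoint pow (a : V) (n : nat) : V :=
  if n is n'.+1 then mul a (pow a n') else a.

Definition semiprime : Prop :=
  forall a, (exists n, pow a n = 0) -> a = 0.

Definition archimedean : Prop :=
  forall x y, le 0 x -> (forall n : nat, le (x *+ n) y) -> x = 0.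

Definition ru_cauchy (s : nat -> V) : Prop :=
  exists u, le 0 u /\ forall eps : R, 0 < eps -> exists N, forall n m,
    (N <= n)%N -> (N <= m)%N -> le (absv (s n - s m)) (eps *: u).

Definition ru_converges (s : nat -> V) (x : V) : Prop :=
  exists u, le 0 u /\ forall eps : R, 0 < eps -> exists N, forall n,
    (N <= n)%N -> le (absv (s n - x)) (eps *: u).

Definition ru_complete : Prop :=
  forall s, ru_cauchy s -> exists x, ru_converges s x.

Definition bounded_qi_closed : Prop :=
  forall a, le (absv a) (absv (mul a a - a)) ->
    exists a' , a + a' = mul a a'.

End FAlgebra.

(* Main.v *)
Require Import Defs.
From HB Require Import structures.
From mathcomp Require Import all_boot all_order all_algebra.
From mathcomp Require Import reals.
From mathcomp Require Import ring lra.
Set Implicit Arguments. Unset Strict Implicit. Unset Printing Implicit Defensive.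
Import Order.TTheory GRing.Theory Num.Theory.
Local Open Scope ring_scope.

Lemma one_neq_m1 (R : realType) : (1 : R) <> -1.
Proof. by move=> h; lra. Qed.

Section VL.
Variables (R : realType) (V : lmodType R) (le : V -> V -> Prop) (join : V -> V -> V).
Hypothesis le_refl : forall x, le x x.
Hypothesis le_anti : forall x y, le x y -> le y x -> x = y.
Hypothesis le_trans : forall x y z, le x y -> le y z -> le x z.
Hypothesis le_add : forall x y z, le x y -> le (x + z) (y + z).
Hypothesis le_scale : forall (c : R) x y, 0 <= c -> le x y -> le (c *: x) (c *: y).
Hypothesis join_ub1 : forall x y, le x (join x y).
Hypothesis join_ub2 : forall x y, le y (join x y).
Hypothesis join_lub : forall x y z, le x z -> le y z -> le (join x y) z.

Local Notation meet := (meet join).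
Local Notation absv := (absv join).
Definition pos x := join x 0.
Definition neg x := join (- x) 0.

Lemma le_addl x y z : le x y -> le (z + x) (z + y).
Proof. by move=> h; rewrite ![z + _]addrC; apply: le_add. Qed.

Lemma le_add2 x y z w : le x y -> le z w -> le (x + z) (y + w).
Proof. move=> h1 h2; apply: (le_trans (le_add _ h1)); exact: le_addl. Qed.

Lemma le_subP x y : le x y <-> le 0 (y - x).
Proof.
split=> h; first by have := le_add (- x) h; rewrite subrr.
by have := le_add x h; rewrite add0r subrK.
Qed.

Lemma le_opp x y : le x y -> le (- y) (- x).
Proof.
move=> h; apply/le_subP; rewrite opprK addrC; exact: (proj1 (le_subP x y) h).
Qed.

Lemma le_oppP x y : le (- y) (- x) -> le x y.
Proof. by move=> /le_opp; rewrite !opprK. Qed.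

Lemma le_sub0 x y : le x y -> le (x - y) 0.
Proof. by move=> h; have := le_add (- y) h; rewrite subrr. Qed.

Lemma le_from_sub0 x y : le (x - y) 0 -> le x y.
Proof. by move=> h; have := le_add y h; rewrite subrK add0r. Qed.

Lemma join_comm x y : join x y = join y x.
Proof. by apply: le_anti; apply: join_lub. Qed.

Lemma join_mono x y x' y' : le x x' -> le y y' -> le (join x y) (join x' y').
Proof.
move=> h1 h2; apply: join_lub.
  exact: (le_trans h1).
exact: (le_trans h2).
Qed.

Lemma join_addr x y z : join x y + z = join (x + z) (y + z).
Proof.
apply: le_anti; last by apply: join_lub; apply: le_add.
have h : le (join x y) (join (x + z) (y + z) - z).
  apply: join_lub.
    by have := le_add (- z) (join_ub1 (x + z) (y + z)); rewrite addrK.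
  by have := le_add (- z) (join_ub2 (x + z) (y + z)); rewrite addrK.
by have := le_add z h; rewrite subrK.
Qed.

Lemma join_addl x y z : z + join x y = join (z + x) (z + y).
Proof. by rewrite addrC join_addr ![z + _]addrC. Qed.

Lemma join_le_eq x y : le y x -> join x y = x.
Proof. by move=> h; apply: le_anti => //; apply: join_lub. Qed.

Lemma scale_join (c : R) x y : 0 <= c -> c *: join x y = join (c *: x) (c *: y).
Proof.
move=> c0; have [->|cn0] := eqVneq c 0.
  by rewrite !scale0r join_le_eq.
apply: le_anti; last by apply: join_lub; apply: le_scale.
have h : le (join x y) (c^-1 *: join (c *: x) (c *: y)).
  have ci : 0 <= c^-1 by rewrite invr_ge0.
  apply: join_lub.
    by have := le_scale ci (join_ub1 (c *: x) (c *: y)); rewrite scalerA mulVf // scale1r.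
  by have := le_scale ci (join_ub2 (c *: x) (c *: y)); rewrite scalerA mulVf // scale1r.
by have := le_scale c0 h; rewrite scalerA mulfV // scale1r.
Qed.

Lemma meetE x y : meet x y = - join (- x) (- y).
Proof. by []. Qed.

Lemma meet_lb1 x y : le (meet x y) x.
Proof. by rewrite meetE; apply: le_oppP; rewrite opprK. Qed.

Lemma meet_lb2 x y : le (meet x y) y.
Proof. by rewrite meetE; apply: le_oppP; rewrite opprK. Qed.

Lemma meet_glb x y z : le z x -> le z y -> le z (meet x y).
Proof.
move=> h1 h2; rewrite meetE; apply: le_oppP; rewrite opprK.
by apply: join_lub; apply: le_opp.
Qed.

Lemma meet_comm x y : meet x y = meet y x.
Proof. by rewrite !meetE join_comm. Qed.

Lemma meet_mono x y x' y' : le x x' -> le y y' -> le (meet x y) (meet x' y').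
Proof.
move=> h1 h2; apply: meet_glb.
  exact: (le_trans (meet_lb1 _ _)).
exact: (le_trans (meet_lb2 _ _)).
Qed.

Lemma meet_addr x y z : meet x y + z = meet (x + z) (y + z).
Proof. by rewrite !meetE -[z]opprK -opprD join_addr -!opprD !opprK. Qed.

Lemma meet_addl x y z : z + meet x y = meet (z + x) (z + y).
Proof. by rewrite addrC meet_addr ![z + _]addrC. Qed.

Lemma meet_id x : meet x x = x.
Proof. by apply: le_anti; [apply: meet_lb1| apply: meet_glb]. Qed.

Lemma meet_le_eq x y : le x y -> meet x y = x.
Proof. by move=> h; apply: le_anti; [apply: meet_lb1 | apply: meet_glb]. Qed.

Lemma scale_meet (c : R) x y : 0 <= c -> c *: meet x y = meet (c *: x) (c *: y).
Proof. by move=> c0; rewrite !meetE scalerN scale_join // !scalerN. Qed.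

Lemma pos_ge0 x : le 0 (pos x). Proof. exact: join_ub2. Qed.
Lemma neg_ge0 x : le 0 (neg x). Proof. exact: join_ub2. Qed.
Lemma pos_ge x : le x (pos x). Proof. exact: join_ub1. Qed.
Lemma neg_ge x : le (- x) (neg x). Proof. exact: join_ub1. Qed.

Lemma neg_pos x : neg x = pos x - x.
Proof. by rewrite /pos /neg join_addr subrr add0r join_comm. Qed.

Lemma pos_neg x : x = pos x - neg x.
Proof. by rewrite neg_pos opprB addrC subrK. Qed.

Lemma pos_meet_neg x : meet (pos x) (neg x) = 0.
Proof.
rewrite neg_pos.
have -> : meet (pos x) (pos x - x) = pos x + meet 0 (- x) by rewrite meet_addl addr0.
by rewrite meetE oppr0 opprK join_comm subrr.
Qed.

Lemma pos_id x : le 0 x -> pos x = x.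
Proof. by move=> h; rewrite /pos join_le_eq. Qed.

Lemma neg_id0 x : le 0 x -> neg x = 0.
Proof.
move=> h; rewrite /neg join_comm join_le_eq //.
by have := le_opp h; rewrite oppr0.
Qed.

Lemma le_pos x w : le x w -> le 0 w -> le (pos x) w.
Proof. by move=> h1 h2; apply: join_lub. Qed.

Lemma absE x : absv x = pos x + neg x.
Proof.
rewrite /absv /pos /neg join_addr add0r join_addl addrN addr0.
have h : le 0 (join x (- x)).
  have h2 : le 0 (join x (- x) + join x (- x)).
    by have := le_add2 (join_ub2 x (- x)) (join_ub1 x (- x)); rewrite addNr.
  have i0 : 0 <= 2^-1 :> R by rewrite invr_ge0.
  have := le_scale i0 h2.
  by rewrite scaler0 -mulr2n -scaler_nat scalerA mulVf ?pnatr_eq0 // scale1r.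
apply: le_anti.
  apply: join_lub.
    exact: (le_trans (join_ub2 0 x) (join_ub1 _ _)).
  exact: (le_trans (join_ub1 (- x) 0) (join_ub2 _ _)).
by apply: join_lub; apply: join_lub => //; by [apply: join_ub1 | apply: join_ub2].
Qed.

Lemma abs_ge x : le x (absv x). Proof. exact: join_ub1. Qed.
Lemma abs_geN x : le (- x) (absv x). Proof. exact: join_ub2. Qed.
Lemma abs_ge0 x : le 0 (absv x).
Proof. rewrite absE -[0]addr0; apply: le_add2; [apply: pos_ge0|apply: neg_ge0]. Qed.
Lemma abs_le x w : le x w -> le (- x) w -> le (absv x) w.
Proof. by move=> h1 h2; apply: join_lub. Qed.
Lemma abs_id x : le 0 x -> absv x = x.
Proof. by move=> h; rewrite absE pos_id // neg_id0 // addr0. Qed.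
Lemma pos_le_abs x : le (pos x) (absv x).
Proof. rewrite absE -{1}[pos x]addr0; apply: le_addl; exact: neg_ge0. Qed.
Lemma neg_le_abs x : le (neg x) (absv x).
Proof. rewrite absE -{1}[neg x]add0r; apply: le_add; exact: pos_ge0. Qed.

Lemma riesz a b c : le 0 a -> le 0 b -> le 0 c ->
  le (meet a (b + c)) (meet a b + meet a c).
Proof.
move=> a0 b0 c0.
rewrite meet_addr meet_addl meet_addl.
have hab : le a (a + a) by rewrite -{1}[a]addr0; apply: le_addl.
have hac : le a (a + c) by rewrite -{1}[a]addr0; apply: le_addl.
have hba : le a (b + a) by rewrite -{1}[a]add0r; apply: le_add.
apply: meet_glb; apply: meet_glb.
- exact: (le_trans (meet_lb1 _ _)).
- exact: (le_trans (meet_lb1 _ _)).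
- exact: (le_trans (meet_lb1 _ _)).
- exact: meet_lb2.
Qed.

Lemma meet_ge0 a b : le 0 a -> le 0 b -> le 0 (meet a b).
Proof. by move=> *; apply: meet_glb. Qed.

Lemma meet_sum4 a a' b b' : le 0 a -> le 0 a' -> le 0 b -> le 0 b' ->
  meet a b = 0 -> meet a b' = 0 -> meet a' b = 0 -> meet a' b' = 0 ->
  meet (a + a') (b + b') = 0.
Proof.
move=> a0 a'0 b0 b'0 h1 h2 h3 h4.
have s0 : forall u v, le 0 u -> le 0 v -> le 0 (u + v).
  by move=> u v u0 v0; rewrite -[0]addr0; apply: le_add2.
apply: le_anti; last by apply: meet_ge0; apply: s0.
apply: (le_trans (riesz _ _ _)) => //; first exact: s0.
rewrite -[0]addr0; apply: le_add2.
  rewrite meet_comm; apply: (le_trans (riesz _ _ _)) => //.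
  by rewrite meet_comm h1 meet_comm h3 addr0.
rewrite meet_comm; apply: (le_trans (riesz _ _ _)) => //.
by rewrite meet_comm h2 meet_comm h4 addr0.
Qed.

Lemma decomp_unique P N : le 0 P -> le 0 N -> meet P N = 0 ->
  pos (P - N) = P /\ neg (P - N) = N.
Proof.
move=> P0 N0 h; split.
  rewrite /pos -[0](subrr P) -join_addl.
  have -> : join (- N) (- P) = - meet N P by rewrite meetE !opprK.
  by rewrite meet_comm h oppr0 addr0.
rewrite /neg opprB -[0](subrr N) -join_addl.
have -> : join (- P) (- N) = - meet P N by rewrite meetE !opprK.
by rewrite h oppr0 addr0.
Qed.

Lemma le_ge0_add u v : le 0 u -> le 0 v -> le 0 (u + v).
Proof. by move=> u0 v0; rewrite -[0]addr0; apply: le_add2. Qed.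

Lemma le_ge0_scale (c : R) u : 0 <= c -> le 0 u -> le 0 (c *: u).
Proof. by move=> c0 u0; have := le_scale c0 u0; rewrite scaler0. Qed.

Hypothesis arch : forall x y, le 0 x -> (forall n : nat, le (x *+ n) y) -> x = 0.

Lemma arch_le z w u : le 0 u -> (forall e : R, 0 < e -> le z (w + e *: u)) -> le z w.
Proof.
move=> u0 h.
have y0 : pos (z - w) = 0.
  apply: (@arch _ u (pos_ge0 _)) => n.
  case: n => [|n]; first by rewrite mulr0n.
  have hn : 0 < (n.+1)%:R :> R by rewrite ltr0n.
  have hi : 0 < (n.+1%:R : R)^-1 by rewrite invr_gt0.
  have hz : le (z - w) ((n.+1%:R : R)^-1 *: u).
    by have := le_add (- w) (h _ hi); rewrite addrAC subrr add0r.
  have := le_scale (ltW hn) hz; rewrite scalerA mulfV ?gt_eqF // scale1r => hz2.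
  rewrite -scaler_nat /pos scale_join ?ler0n // scaler0.
  by apply: join_lub.
by apply: le_from_sub0; rewrite -y0; apply: pos_ge.
Qed.

Lemma chain_ineq v w : le 0 v ->
  le (meet (v + pos (w + v)) (absv w)) (v + pos w).
Proof.
move=> v0.
have A0 : le 0 (v + pos (w + v)) by apply: le_ge0_add => //; apply: pos_ge0.
rewrite absE; apply: (le_trans (riesz _ _ _)) => //; try apply: pos_ge0; try apply: neg_ge0.
rewrite addrC; apply: le_add2; last exact: meet_lb2.
have -> : neg w = v + (neg w - v) by rewrite addrC subrK.
rewrite -meet_addl -[X in le _ X]addr0; apply: le_addl.
rewrite -(pos_meet_neg (w + v)); apply: meet_mono => //.
rewrite /neg join_addr add0r.
apply: join_lub.
  rewrite -opprD; exact: join_ub1.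
apply: (le_trans _ (join_ub2 _ _)).
by have := le_opp v0; rewrite oppr0.
Qed.


Variable mul : V -> V -> V.
Hypothesis vmulA : forall x y z, mul x (mul y z) = mul (mul x y) z.
Hypothesis vmulDl : forall x y z, mul (x + y) z = mul x z + mul y z.
Hypothesis vmulDr : forall x y z, mul x (y + z) = mul x y + mul x z.
Hypothesis vmulZl : forall (c : R) x y, mul (c *: x) y = c *: mul x y.
Hypothesis vmulZr : forall (c : R) x y, mul x (c *: y) = c *: mul x y.
Hypothesis mul_pos : forall a b, le 0 a -> le 0 b -> le 0 (mul a b).
Hypothesis fax : forall a b c, meet a b = 0 -> le 0 c ->
        meet (mul a c) b = 0 /\ meet (mul c a) b = 0.
Hypothesis semip : forall a, (exists n, pow mul a n = 0) -> a = 0.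

Lemma vmul0l y : mul 0 y = 0.
Proof. by have := vmulZl 0 0 y; rewrite !scale0r. Qed.
Lemma vmul0r y : mul y 0 = 0.
Proof. by have := vmulZr 0 y 0; rewrite !scale0r. Qed.
Lemma vmulNl x y : mul (- x) y = - mul x y.
Proof. by rewrite -scaleN1r vmulZl scaleN1r. Qed.
Lemma vmulNr x y : mul x (- y) = - mul x y.
Proof. by rewrite -scaleN1r vmulZr scaleN1r. Qed.
Lemma vmulBl x y z : mul (x - y) z = mul x z - mul y z.
Proof. by rewrite vmulDl vmulNl. Qed.
Lemma vmulBr x y z : mul x (y - z) = mul x y - mul x z.
Proof. by rewrite vmulDr vmulNr. Qed.

Lemma mul_monol c x y : le 0 c -> le x y -> le (mul c x) (mul c y).
Proof.
move=> c0 h; apply/le_subP; rewrite -vmulBr; apply: mul_pos => //.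
exact: (proj1 (le_subP x y) h).
Qed.

Lemma mul_monor c x y : le 0 c -> le x y -> le (mul x c) (mul y c).
Proof.
move=> c0 h; apply/le_subP; rewrite -vmulBl; apply: mul_pos => //.
exact: (proj1 (le_subP x y) h).
Qed.

Lemma meet0_ge0 u v : meet u v = 0 -> le 0 u /\ le 0 v.
Proof. by move=> h; split; rewrite -h; [apply: meet_lb1 | apply: meet_lb2]. Qed.

Lemma disj_mul u v : meet u v = 0 -> mul u v = 0 /\ mul v u = 0.
Proof.
have key : forall u v, meet u v = 0 -> mul u v = 0.
  move=> a b h; have [a0 b0] := meet0_ge0 h.
  have h1 := proj1 (fax h b0).
  have h2 : meet b (mul a b) = 0 by rewrite meet_comm.
  by have := proj2 (fax h2 a0); rewrite meet_id.
move=> h; split; first exact: key.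
by apply: key; rewrite meet_comm.
Qed.

Lemma nilL w v : le 0 w -> le w v -> mul v w = 0 -> w = 0.
Proof.
move=> w0 wv h; apply: semip; exists 1%N => /=.
apply: le_anti; last exact: mul_pos.
by rewrite -h; apply: mul_monor.
Qed.

Lemma nilR w v : le 0 w -> le w v -> mul w v = 0 -> w = 0.
Proof.
move=> w0 wv h; apply: semip; exists 1%N => /=.
apply: le_anti; last exact: mul_pos.
by rewrite -h; apply: mul_monol.
Qed.

Lemma sq_ge0 z : le 0 (mul z z).
Proof.
have [h1 h2] := disj_mul (pos_meet_neg z).
rewrite (pos_neg z) vmulBl !vmulBr h1 h2 subr0 sub0r opprK.
by apply: le_ge0_add; apply: mul_pos; try apply: pos_ge0; apply: neg_ge0.
Qed.

Definition good (L : V -> V) d := [/\ le 0 (L (pos d)), le 0 (L (neg d))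
  & meet (L (pos d)) (L (neg d)) = 0].

Section Hom.
Variable L : V -> V.
Hypothesis Ladd : forall u v, L (u - v) = L u - L v.

Lemma hom_posneg d : good L d -> L (pos d) = pos (L d) /\ L (neg d) = neg (L d).
Proof.
case=> h1 h2 h3.
have := decomp_unique h1 h2 h3; rewrite -Ladd -pos_neg.
by case=> -> ->.
Qed.

Lemma L0 : L 0 = 0.
Proof. by have := Ladd 0 0; rewrite !subrr. Qed.

Lemma LN u : L (- u) = - L u.
Proof. by rewrite -sub0r Ladd L0 sub0r. Qed.

Lemma LD u v : L (u + v) = L u + L v.
Proof. by rewrite -{1}[v]opprK Ladd LN opprK. Qed.

Lemma join_pos u v : join u v = v + pos (u - v).
Proof. by rewrite /pos addrC join_addr subrK add0r. Qed.

Lemma hom_join u v : good L (u - v) -> L (join u v) = join (L u) (L v).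
Proof.
move=> g; rewrite join_pos LD (proj1 (hom_posneg g)) Ladd.
by rewrite -join_pos.
Qed.

Lemma hom_meet u v : good L (- u - - v) -> L (meet u v) = meet (L u) (L v).
Proof. by move=> g; rewrite meetE LN hom_join // !LN. Qed.

Lemma hom_abs d : good L d -> L (absv d) = absv (L d).
Proof.
by move=> g; have [h1 h2] := hom_posneg g; rewrite !absE LD h1 h2.
Qed.

End Hom.

Lemma good_mulL c d : le 0 c -> good (mul c) d.
Proof.
move=> c0; split; [by apply: mul_pos => //; apply: pos_ge0 | by apply: mul_pos => //; apply: neg_ge0 | ].
have h := pos_meet_neg d.
have h1 := proj2 (fax h c0).
have h2 : meet (neg d) (mul c (pos d)) = 0 by rewrite meet_comm.
by have := proj2 (fax h2 c0); rewrite meet_comm.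
Qed.

Lemma good_S x d : le 0 x -> good (fun z => z + mul x z) d.
Proof.
move=> x0.
have h := pos_meet_neg d.
have h1 := proj2 (fax h x0).
have h2 : meet (neg d) (mul x (pos d)) = 0 by rewrite meet_comm.
have h3 := proj2 (fax h2 x0).
have h4 : meet (neg d) (pos d) = 0 by rewrite meet_comm.
have h5 := proj2 (fax h4 x0).
have p0 := pos_ge0 d; have n0 := neg_ge0 d.
have mp0 : le 0 (mul x (pos d)) by apply: mul_pos.
have mn0 : le 0 (mul x (neg d)) by apply: mul_pos.
split; try by apply: le_ge0_add.
apply: meet_sum4 => //.
- by rewrite meet_comm.
- by rewrite meet_comm.
Qed.

Hypothesis rucomp : ru_complete le join.

Lemma abs_tri u v : le (absv (u + v)) (absv u + absv v).
Proof.
apply: abs_le; first by apply: le_add2; apply: abs_ge.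
by rewrite opprD; apply: le_add2; apply: abs_geN.
Qed.

Lemma scale_coef_le (a b : R) u : a <= b -> le 0 u -> le (a *: u) (b *: u).
Proof.
move=> ab u0; apply/le_subP; rewrite -scalerBl; apply: le_ge0_scale => //.
by rewrite subr_ge0.
Qed.

Lemma abs_scale_le (c : R) z : le (absv (c *: z)) (`|c| *: absv z).
Proof.
have [c0|c0] := lerP 0 c.
  rewrite ger0_norm //; apply: abs_le; first by apply: le_scale => //; apply: abs_ge.
  by rewrite -scalerN; apply: le_scale => //; apply: abs_geN.
have nc : 0 <= - c by rewrite oppr_ge0 ltW.
rewrite ltr0_norm //; apply: abs_le.
  have -> : c *: z = (- c) *: (- z) by rewrite scaleNr scalerN opprK.
  by apply: le_scale => //; apply: abs_geN.
by rewrite -scaleNr; apply: le_scale => //; apply: abs_ge.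
Qed.

Lemma le_addr_pos u w : le 0 w -> le u (u + w).
Proof. by move=> h; rewrite -{1}[u]addr0; apply: le_addl. Qed.
Lemma le_addl_pos u w : le 0 w -> le u (w + u).
Proof. by move=> h; rewrite addrC; apply: le_addr_pos. Qed.

Lemma abs_join_le u v : le (absv (join u v)) (absv u + absv v).
Proof.
apply: abs_le.
  apply: join_lub.
    exact: (le_trans (abs_ge u) (le_addr_pos _ (abs_ge0 v))).
  exact: (le_trans (abs_ge v) (le_addl_pos _ (abs_ge0 u))).
apply: (le_trans (le_opp (join_ub1 u v))).
exact: (le_trans (abs_geN u) (le_addr_pos _ (abs_ge0 v))).
Qed.

Section Solve.
Variables (x : V) (mu : R).
Hypothesis x0 : le 0 x.
Hypothesis hmu : mu = 1 \/ mu = -1.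
Hypothesis hD : mu = -1 -> le 0 (mul x x - 2 *: x).

Definition Uu := x + mul x x.
Definition Id z := exists K : R, le (absv z) (K *: Uu).
Definition T z := mu *: z + mul x z.
Definition S z := z + mul x z.
Definition Y := T x.
Definition lc (a b c : R) := a *: x + b *: Y + c *: T Y.
Definition E (s : R) := lc (2 * s) (- s ^+ 2) 0.
Definition W (s : R) := lc 1 (- s) 0.
Definition sg (N j : nat) : R := j%:R / N%:R.
Fixpoint G (N k : nat) : V :=
  match k with 0 => E 0 | k'.+1 => join (G N k') (E (sg N k'.+1)) end.
Fixpoint Mm (N k : nat) : V :=
  match k with 0 => absv (W 0) | k'.+1 => meet (Mm N k') (absv (W (sg N k'.+1))) end.

Lemma xx0 : le 0 (mul x x). Proof. exact: sq_ge0. Qed.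
Lemma Uu0 : le 0 Uu. Proof. exact: le_ge0_add x0 xx0. Qed.

Lemma lc_add a b c a' b' c' : lc a b c + lc a' b' c' = lc (a + a') (b + b') (c + c').
Proof. by rewrite /lc !scalerDl addrACA (addrACA (a *: x)). Qed.
Lemma lc_opp a b c : - lc a b c = lc (- a) (- b) (- c).
Proof. by rewrite /lc !opprD !scaleNr. Qed.
Lemma lc_sub a b c a' b' c' : lc a b c - lc a' b' c' = lc (a - a') (b - b') (c - c').
Proof. by rewrite lc_opp lc_add. Qed.
Lemma lc_scale k a b c : k *: lc a b c = lc (k * a) (k * b) (k * c).
Proof. by rewrite /lc !scalerDr !scalerA. Qed.
Lemma lc_x : x = lc 1 0 0.
Proof. by rewrite /lc !scale0r !addr0 scale1r. Qed.
Lemma lc_Y : Y = lc 0 1 0.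
Proof. by rewrite /lc !scale0r addr0 add0r scale1r. Qed.
Lemma lc_TY : T Y = lc 0 0 1.
Proof. by rewrite /lc !scale0r !add0r scale1r. Qed.
Lemma lc_eq a b c a' b' c' : a = a' -> b = b' -> c = c' -> lc a b c = lc a' b' c'.
Proof. by move=> -> -> ->. Qed.

Lemma T_sub u v : T (u - v) = T u - T v.
Proof. by rewrite /T scalerBr vmulBr opprD addrACA. Qed.
Lemma T_add u v : T (u + v) = T u + T v.
Proof. by rewrite /T scalerDr vmulDr addrACA. Qed.
Lemma T_scale (c : R) u : T (c *: u) = c *: T u.
Proof. by rewrite /T vmulZr scalerDr !scalerA mulrC. Qed.
Lemma S_sub u v : S (u - v) = S u - S v.
Proof. by rewrite /S vmulBr opprD addrACA. Qed.
Lemma S_scale (c : R) u : S (c *: u) = c *: S u.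
Proof. by rewrite /S vmulZr scalerDr. Qed.

Lemma T_lc a b : T (lc a b 0) = lc 0 a b.
Proof.
rewrite /lc !scale0r !addr0 add0r T_add !T_scale.
by [].
Qed.

Lemma Id_bound z (K : R) : le z (K *: Uu) -> le (- z) (K *: Uu) -> Id z.
Proof. by move=> h1 h2; exists K; apply: abs_le. Qed.
Lemma Id_add u v : Id u -> Id v -> Id (u + v).
Proof.
case=> K1 h1 [K2 h2]; exists (K1 + K2).
by apply: (le_trans (abs_tri _ _)); rewrite scalerDl; apply: le_add2.
Qed.
Lemma Id_scale (c : R) u : Id u -> Id (c *: u).
Proof.
case=> K h; exists (`|c| * K); apply: (le_trans (abs_scale_le _ _)).
by rewrite -scalerA; apply: le_scale.
Qed.
Lemma Id_opp u : Id u -> Id (- u).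
Proof. by move=> h; rewrite -scaleN1r; apply: Id_scale. Qed.
Lemma Id_sub u v : Id u -> Id v -> Id (u - v).
Proof. by move=> h1 h2; apply: Id_add => //; apply: Id_opp. Qed.
Lemma Id_join u v : Id u -> Id v -> Id (join u v).
Proof.
case=> K1 h1 [K2 h2]; exists (K1 + K2).
by apply: (le_trans (abs_join_le _ _)); rewrite scalerDl; apply: le_add2.
Qed.
Lemma Id_meet u v : Id u -> Id v -> Id (meet u v).
Proof. by move=> h1 h2; rewrite meetE; apply/Id_opp/Id_join; apply: Id_opp. Qed.
Lemma Id_pos d : Id d -> Id (pos d).
Proof.
case=> K h; exists K; rewrite abs_id; last exact: pos_ge0.
exact: (le_trans (pos_le_abs d)).
Qed.
Lemma Id_neg d : Id d -> Id (neg d).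
Proof.
case=> K h; exists K; rewrite abs_id; last exact: neg_ge0.
exact: (le_trans (neg_le_abs d)).
Qed.
Lemma Id_abs d : Id d -> Id (absv d).
Proof. by case=> K h; exists K; rewrite abs_id //; apply: abs_ge0. Qed.
Lemma Id_x : Id x.
Proof. by exists 1; rewrite abs_id // scale1r; apply: le_addr_pos; apply: xx0. Qed.
Lemma Id_xx : Id (mul x x).
Proof. by exists 1; rewrite abs_id ?scale1r; [apply: le_addl_pos | apply: xx0]. Qed.
Lemma Id_Y : Id Y.
Proof. by apply: Id_add; [apply: Id_scale; apply: Id_x | apply: Id_xx]. Qed.

Lemma mu_cases : mu = 1 \/ mu = -1. Proof. exact: hmu. Qed.
Lemma mu_le1 : mu <= 1. Proof. by case: hmu => ->; lra. Qed.


Lemma T_pos z : le 0 z -> Id z -> le 0 (T z).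
Proof.
move=> z0 [K hK].
have xz0 : le 0 (mul x z) by apply: mul_pos.
case: hmu => hm; first by rewrite /T hm scale1r; apply: le_ge0_add.
set y := mul x z - 2 *: z.
have hxy : mul x y = mul (mul x x - 2 *: x) z.
  by rewrite /y vmulBr vmulZr vmulA vmulBl vmulZl.
have xy0 : le 0 (mul x y) by rewrite hxy; apply: mul_pos => //; apply: hD.
have [_ hn] := hom_posneg (vmulBr x) (good_mulL y x0).
have xny : mul x (neg y) = 0 by rewrite hn neg_id0.
have zK : le z (K *: Uu) by rewrite -(abs_id z0).
have h2 : le (2 *: z) ((2 * K) *: Uu) by rewrite -scalerA; apply: le_scale.
have ny : le (neg y) ((2 * K) *: Uu).
  apply: join_lub.
    apply: (le_trans _ h2); rewrite /y opprB.
    by apply/le_subP; rewrite opprB addrC subrK.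
  by apply: (le_trans _ h2); apply: le_ge0_scale.
have ny0 : neg y = 0.
  apply: (nilL (neg_ge0 _) ny).
  by rewrite vmulZl /Uu vmulDl -vmulA xny vmul0r addr0 scaler0.
have y0 : le 0 y by rewrite (pos_neg y) ny0 subr0; apply: pos_ge0.
have -> : T z = y + z.
  rewrite /T hm /y scaleN1r addrC -addrA; congr (_ + _).
  by rewrite scaler_nat mulr2n opprD -addrA addNr addr0.
exact: le_ge0_add.
Qed.

Lemma T_le_S z : le 0 z -> le (T z) (S z).
Proof.
move=> z0; rewrite /T /S; apply: le_add.
by rewrite -{2}[z]scale1r; apply: scale_coef_le => //; apply: mu_le1.
Qed.

Lemma S_pos z : le 0 z -> le 0 (S z).
Proof. by move=> z0; apply: le_ge0_add => //; apply: mul_pos. Qed.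

Lemma T_good d : Id d -> good T d.
Proof.
move=> hd; split.
- exact: T_pos (pos_ge0 _) (Id_pos hd).
- exact: T_pos (neg_ge0 _) (Id_neg hd).
have [_ _ h] := good_S d x0.
apply: le_anti; last by apply: meet_ge0; apply: T_pos; 
  [apply: pos_ge0 | apply: Id_pos | apply: neg_ge0 | apply: Id_neg].
rewrite -h; apply: meet_mono; apply: T_le_S; [apply: pos_ge0|apply: neg_ge0].
Qed.

Lemma T_mono u v : Id u -> Id v -> le u v -> le (T u) (T v).
Proof.
move=> hu hv h; apply/le_subP; rewrite -T_sub; apply: T_pos.
  exact: (proj1 (le_subP u v) h).
exact: Id_sub.
Qed.

Lemma S_mono u v : le u v -> le (S u) (S v).
Proof.
move=> h; apply/le_subP; rewrite -S_sub; apply: S_pos.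
exact: (proj1 (le_subP u v) h).
Qed.

Lemma Y_ge0 : le 0 Y.
Proof.
rewrite /Y /T; case: hmu => hm.
  by rewrite hm scale1r; apply: le_ge0_add => //; apply: xx0.
have -> : mu *: x + mul x x = (mul x x - 2 *: x) + x.
  rewrite hm scaleN1r addrC -addrA; congr (_ + _).
  by rewrite scaler_nat mulr2n opprD -addrA addNr addr0.
by apply: le_ge0_add => //; apply: hD.
Qed.

Lemma TY_ge0 : le 0 (T Y). Proof. exact: T_pos Y_ge0 Id_Y. Qed.

Lemma Id_lc a b : Id (lc a b 0).
Proof.
rewrite /lc scale0r addr0; apply: Id_add; apply: Id_scale; [exact: Id_x|exact: Id_Y].
Qed.

Lemma E0 : E 0 = 0.
Proof.
rewrite /E /lc mulr0 (_ : (0 : R) ^+ 2 = 0) ?expr2 ?mulr0 //.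
by rewrite oppr0 !scale0r !addr0.
Qed.

Lemma E_le s s' : 0 <= s' -> s' <= s -> le (E s) (E s' + (2 * (s - s')) *: x).
Proof.
move=> s'0 ss'; apply/le_subP.
have -> : E s' + (2 * (s - s')) *: x - E s = (s ^+ 2 - s' ^+ 2) *: Y.
  by rewrite /E lc_x lc_Y !lc_scale lc_add lc_sub; apply: lc_eq; ring.
apply: le_ge0_scale; last exact: Y_ge0.
rewrite subr_ge0; nra.
Qed.

Lemma E_le2x s : 0 <= s <= 1 -> le (E s) (2 *: x).
Proof.
case/andP=> s0 s1; apply: (le_trans (E_le (lexx 0) s0)).
rewrite E0 add0r subr0; apply: scale_coef_le => //; nra.
Qed.

Definition Q s := W s - s *: T (W s).

Lemma Q_E s : x - T (E s) = Q s.
Proof.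
rewrite /Q /E /W !T_lc lc_x lc_scale !lc_sub; apply: lc_eq; ring.
Qed.

Lemma Q_alt s : Q s + (2 * s) *: Y = x + (s ^+ 2) *: T Y.
Proof.
rewrite /Q /W T_lc lc_x lc_TY lc_Y !lc_scale lc_sub !lc_add; apply: lc_eq; ring.
Qed.

Lemma W_E s : W s = x - s *: Y.
Proof. by rewrite /W /lc scale0r addr0 scale1r scaleNr. Qed.

Lemma xQ s : mul x (Q s) = mul (W s) (W s).
Proof.
rewrite /Q vmulBr vmulZr.
have -> : mul (W s) (W s) = mul (x - s *: Y) (W s) by rewrite -W_E.
rewrite vmulBl vmulZl; congr (_ - _ *: _).
by rewrite /Y /T vmulDl vmulDr vmulZl vmulZr vmulA.
Qed.

Lemma oppr_from_eq (q a b : V) : q + a = b -> - q = a - b.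
Proof. by move=> <-; rewrite opprD addrC subrK. Qed.

Lemma Q_ge0 s : 0 <= s <= 1 -> le 0 (Q s).
Proof.
case/andP=> s0 s1.
have xq0 : le 0 (mul x (Q s)) by rewrite xQ; apply: sq_ge0.
have [_ hn] := hom_posneg (vmulBr x) (good_mulL (Q s) x0).
have xnq : mul x (neg (Q s)) = 0 by rewrite hn neg_id0.
have P0 : le 0 (x + (s ^+ 2) *: T Y).
  by apply: le_ge0_add => //; apply: le_ge0_scale; [apply: sqr_ge0 | apply: TY_ge0].
have Y0 := Y_ge0.
have nq : le (neg (Q s)) (2 *: Y).
  apply: join_lub; last exact: le_ge0_scale.
  have -> : - Q s = (2 * s) *: Y - (x + (s ^+ 2) *: T Y).
    by apply: oppr_from_eq; apply: Q_alt.
  apply: (le_trans (y := (2 * s) *: Y)).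
    by apply/le_subP; rewrite opprB addrC subrK.
  by apply: scale_coef_le => //; nra.
have nq0 : neg (Q s) = 0.
  apply: (nilL (neg_ge0 _) nq).
  by rewrite vmulZl /Y /T vmulDl vmulZl -vmulA xnq vmul0r scaler0 addr0 scaler0.
by rewrite (pos_neg (Q s)) nq0 subr0; apply: pos_ge0.
Qed.

Lemma TE_le s : 0 <= s <= 1 -> le (T (E s)) x.
Proof. by move=> h; apply/le_subP; rewrite Q_E; apply: Q_ge0. Qed.

Lemma sg0 N : sg N 0 = 0. Proof. by rewrite /sg mul0r. Qed.
Lemma sgN N : (0 < N)%N -> sg N N = 1.
Proof. by move=> h; rewrite /sg divff // pnatr_eq0 -lt0n. Qed.
Lemma sg_ge0 N j : 0 <= sg N j.
Proof. by rewrite /sg divr_ge0 ?ler0n. Qed.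
Lemma sg_le1 N j : (0 < N)%N -> (j <= N)%N -> sg N j <= 1.
Proof. by move=> h hj; rewrite /sg ler_pdivrMr ?ltr0n // mul1r ler_nat. Qed.
Lemma sg_step N k : sg N k.+1 = sg N k + N%:R^-1.
Proof. by rewrite /sg -natr1 mulrDl mul1r. Qed.
Lemma sg_01 N j : (0 < N)%N -> (j <= N)%N -> 0 <= sg N j <= 1.
Proof. by move=> *; rewrite sg_ge0 sg_le1. Qed.

Lemma G_ub N j k : (j <= k)%N -> le (E (sg N j)) (G N k).
Proof.
elim: k j => [|k IH] j hj.
  by move: hj; rewrite leqn0 => /eqP ->; rewrite sg0; apply: le_refl.
rewrite /=; move: hj; rewrite leq_eqVlt => /orP[/eqP ->|hj].
  exact: join_ub2.
exact: (le_trans (IH j hj) (join_ub1 _ _)).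
Qed.

Lemma G_lub N k w : (forall j, (j <= k)%N -> le (E (sg N j)) w) -> le (G N k) w.
Proof.
elim: k => [|k IH] h /=.
  by have := h 0%N (leqnn 0); rewrite sg0.
apply: join_lub; last exact: h.
by apply: IH => j hj; apply: h; apply: leqW.
Qed.

Lemma G_ge0 N k : le 0 (G N k).
Proof. by rewrite -E0 -(sg0 N); apply: G_ub. Qed.

Lemma x_le_U : le x Uu. Proof. exact: le_addr_pos xx0. Qed.

Lemma G_le2x N k : (0 < N)%N -> (k <= N)%N -> le (G N k) (2 *: x).
Proof.
move=> hN hk; apply: G_lub => j hj; apply: E_le2x; apply: sg_01 => //.
exact: leq_trans hj hk.
Qed.

Lemma Id_G N k : (0 < N)%N -> (k <= N)%N -> Id (G N k).
Proof.
move=> hN hk; apply: (@Id_bound _ 2).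
  by apply: (le_trans (G_le2x hN hk)); apply: le_scale => //; apply: x_le_U.
apply: (le_trans (_ : le _ 0)).
  by have := le_opp (G_ge0 N k); rewrite oppr0.
by apply: le_ge0_scale => //; apply: Uu0.
Qed.

Lemma TG_le N k : (0 < N)%N -> (k <= N)%N -> le (T (G N k)) x.
Proof.
move=> hN; elim: k => [|k IH] hk /=; first by apply: TE_le; rewrite lexx ler01.
rewrite (hom_join T_sub); last first.
  by apply: T_good; apply: Id_sub; [apply: Id_G; [|apply: ltnW]|apply: Id_lc].
apply: join_lub; first by apply: IH; apply: ltnW.
by apply: TE_le; apply: sg_01.
Qed.

Lemma approx N s : (0 < N)%N -> 0 <= s <= 1 ->
  le (E s) (G N N + (2 / N%:R) *: x).
Proof.
move=> hN /andP[s0 s1].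
have n0 : 0 < N%:R :> R by rewrite ltr0n.
set n := N%:R : R.
set j := Num.truncn (s * n).
have sn0 : 0 <= s * n by apply: mulr_ge0 => //; apply: ltW.
have /andP[hj1 hj2] := truncn_itv sn0; rewrite -/j in hj1 hj2.
have hjN : (j <= N)%N.
  by rewrite -(ler_nat R) -/n; nra.
have t1 : n * n^-1 = 1 by rewrite mulfV // gt_eqF.
have t0 : 0 < n^-1 by rewrite invr_gt0.
have hs1 : sg N j <= s by rewrite /sg -/n; nra.
have hs2 : 2 * (s - sg N j) <= 2 / n by rewrite /sg -/n; nra.
apply: (le_trans (E_le (sg_ge0 N j) hs1)).
apply: le_add2; first exact: G_ub.
by apply: scale_coef_le.
Qed.

Lemma G_cmp N M : (0 < N)%N -> (0 < M)%N ->
  le (G M M) (G N N + (2 / N%:R) *: x).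
Proof. by move=> hN hM; apply: G_lub => j hj; apply: approx => //; apply: sg_01. Qed.

Lemma Nbig (e : R) : 0 < e -> exists n, (0 < n)%N /\ forall m, (n <= m)%N -> 2 / m%:R <= e.
Proof.
move=> e0; exists (Num.truncn (2 / e)).+1; split => // m hm.
have h1 := truncnS_gt (2 / e).
have h2 : ((Num.truncn (2 / e)).+1%:R : R) <= m%:R by rewrite ler_nat.
have m0 : 0 < m%:R :> R by rewrite ltr0n; apply: leq_trans hm.
rewrite ler_pdivrMr //.
have : 2 / e < m%:R by apply: (Order.POrderTheory.lt_le_trans h1 h2).
rewrite ltr_pdivrMr // => h; lra.
Qed.

Lemma G_diff n m : (0 < n)%N -> (0 < m)%N -> le (G n n - G m m) ((2 / m%:R) *: x).
Proof.
move=> n0 m0; have := le_add (- G m m) (G_cmp m0 n0).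
by rewrite addrAC subrr add0r.
Qed.

Lemma G_cauchy : ru_cauchy le join (fun n => G n n).
Proof.
exists x; split => // e e0.
have [N [N0 hN]] := Nbig e0.
exists N => n m hn hm.
have n0 : (0 < n)%N by apply: leq_trans hn.
have m0 : (0 < m)%N by apply: leq_trans hm.
apply: abs_le.
  apply: (le_trans (G_diff n0 m0)); apply: scale_coef_le => //; exact: hN.
rewrite opprB; apply: (le_trans (G_diff m0 n0)); apply: scale_coef_le => //; exact: hN.
Qed.

Lemma Ymx : le 0 (Y - x).
Proof.
rewrite /Y /T; case: hmu => hm.
  by rewrite hm scale1r addrAC subrr add0r; apply: xx0.
have -> : mu *: x + mul x x - x = mul x x - 2 *: x.
  rewrite hm scaleN1r addrAC addrC; congr (_ + _).
  by rewrite scaler_nat mulr2n opprD.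
exact: hD.
Qed.

Lemma W_step s t : W s = W (s + t) + t *: Y.
Proof. by rewrite !W_E scalerDl opprD addrA subrK. Qed.

Lemma Id_W s : Id (W s). Proof. exact: Id_lc. Qed.

Lemma Q_le_S s : 0 <= s <= 1 -> le (Q s) (2 *: S (absv (W s))).
Proof.
case/andP=> s0 s1.
have hT := hom_abs T_sub (T_good (Id_W s)).
have TW0 : le 0 (T (absv (W s))) by apply: T_pos; [apply: abs_ge0|apply: Id_abs; apply: Id_W].
have WS : le (absv (W s)) (S (absv (W s))).
  by apply: le_addr_pos; apply: mul_pos => //; apply: abs_ge0.
rewrite scaler_nat mulr2n /Q; apply: le_add2.
  exact: (le_trans (abs_ge _) WS).
rewrite -scalerN; apply: (le_trans (le_scale s0 (abs_geN (T (W s))))).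
rewrite -hT; apply: (le_trans (scale_coef_le s1 TW0)); rewrite scale1r.
by apply: T_le_S; apply: abs_ge0.
Qed.

Lemma S_meet u v : S (meet u v) = meet (S u) (S v).
Proof. by apply: (hom_meet S_sub); apply: good_S. Qed.

Lemma solve_exists : exists b, mu *: b + mul x b = x /\ le 0 b /\ le b (4 *: x).
Proof.
have [b [u0 [u00 hb]]] := rucomp G_cauchy.
have b_ge : forall s, 0 <= s <= 1 -> le (E s) b.
  move=> s hs; apply: (arch_le (u := u0 + x)); first exact: le_ge0_add.
  move=> e e0.
  have [N1 hN1] := hb e e0.
  have [n [n0 hn]] := Nbig e0.
  have m0 : (0 < maxn n N1)%N by apply: leq_trans n0 (leq_maxl _ _).
  apply: (le_trans (approx m0 hs)).
  rewrite scalerDr addrA; apply: le_add2; last first.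
    by apply: scale_coef_le => //; apply: hn; apply: leq_maxl.
  have := le_trans (abs_ge _) (hN1 _ (leq_maxr n N1)).
  move/(le_add b); rewrite subrK addrC //.
have b_le : forall n, (0 < n)%N -> le b (G n n + (2 / n%:R) *: x).
  move=> n n0; apply: (arch_le (u := u0)) => // e e0.
  have [N1 hN1] := hb e e0.
  have m0 : (0 < maxn 1 N1)%N by apply: leq_trans (leq_maxl _ _).
  have h1 := le_trans (abs_geN _) (hN1 _ (leq_maxr 1 N1)).
  rewrite opprB in h1.
  have h2 := le_add (G (maxn 1 N1) (maxn 1 N1)) h1; rewrite subrK in h2.
  apply: (le_trans h2); rewrite addrC; apply: le_add.
  exact: G_cmp.
have b0 : le 0 b by rewrite -E0; apply: b_ge; rewrite lexx ler01.
have b4 : le b (4 *: x).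
  apply: (le_trans (b_le 1%N isT)).
  have -> : (4 : R) *: x = 2 *: x + (2 / 1%:R) *: x.
    by rewrite -scalerDl divr1; congr (_ *: _); lra.
  by apply: le_add; apply: G_le2x.
have Idb : Id b.
  apply: (@Id_bound _ 4).
    by apply: (le_trans b4); apply: le_scale => //; apply: x_le_U.
  apply: (le_trans (_ : le _ 0)); first by have := le_opp b0; rewrite oppr0.
  by apply: le_ge0_scale => //; apply: Uu0.
have Tb_le : le (T b) x.
  apply: (arch_le (u := Y)); first exact: Y_ge0.
  move=> e e0; have [n [n0 hn]] := Nbig e0.
  have IdGn : Id (G n n + (2 / n%:R) *: x).
    by apply: Id_add; [apply: Id_G | apply: Id_scale; apply: Id_x].
  apply: (le_trans (T_mono Idb IdGn (b_le n n0))).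
  rewrite T_add T_scale -/Y; apply: le_add2; first exact: TG_le.
  by apply: scale_coef_le; [apply: hn | apply: Y_ge0].
have Tb_ge : le x (T b).
  apply: le_from_sub0; apply: (arch_le (u := S Y)); first exact: S_pos Y_ge0.
  move=> e e0; have [n [n0 hn]] := Nbig e0.
  have hcQ : forall s, 0 <= s <= 1 -> le (x - T b) (2 *: S (absv (W s))).
    move=> s hs; apply: (le_trans _ (Q_le_S hs)); rewrite -Q_E.
    by apply: le_addl; apply: le_opp; apply: T_mono => //; [apply: Id_lc|apply: b_ge].
  have hc : forall k, (k <= n)%N -> le (x - T b) (2 *: S (Mm n k)).
    elim=> [|k IH] hk /=.
      have := hcQ (sg n 0) (sg_01 n0 (leq0n _)); rewrite sg0; exact: id.
    rewrite S_meet scale_meet //; apply: meet_glb; first by apply: IH; apply: ltnW.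
    by apply: hcQ; apply: sg_01.
  have chain : forall k, (k <= n)%N ->
      le (Mm n k) ((n%:R^-1) *: Y + pos (W (sg n k))).
    elim=> [|k IH] hk /=.
      rewrite sg0 W_E scale0r subr0 abs_id // pos_id //.
      by apply: le_addl_pos; apply: le_ge0_scale; [rewrite invr_ge0 ler0n|apply: Y_ge0].
    apply: (le_trans (meet_mono (IH (ltnW hk)) (le_refl _))).
    rewrite (W_step (sg n k) (n%:R^-1)) -sg_step.
    by apply: chain_ineq; apply: le_ge0_scale; [rewrite invr_ge0 ler0n|apply: Y_ge0].
  have W1 : pos (W (sg n n)) = 0.
    rewrite sgN // W_E scale1r /pos join_comm join_le_eq //.
    by have := le_opp Ymx; rewrite oppr0 opprB.
  apply: (le_trans (hc n (leqnn n))); rewrite add0r.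
  apply: (le_trans (le_scale _ (S_mono (chain n (leqnn n))))) => //.
  rewrite W1 addr0 S_scale scalerA; apply: scale_coef_le; last exact: S_pos Y_ge0.
  by have := hn n (leqnn n); rewrite mulrC.
exists b; split => //.
by apply: le_anti.
Qed.

End Solve.

Lemma sub_eq_opp (a b c : V) : a - b = - c -> a = b - c.
Proof. by move=> h; rewrite -[a](subrK b) h addrC. Qed.

Lemma D_pos p n : le 0 p -> le 0 n -> mul p n = 0 ->
  le (p + n) (absv ((mul p p - p) + (mul n n + n))) -> le 0 (mul p p - 2 *: p).
Proof.
move=> p0 n0 hpn hyp.
set f := mul p p - p.
have hz : mul p (f + (mul n n + n)) = mul p f.
  by rewrite vmulDr vmulDr vmulA hpn vmul0l !addr0.
have hyp' : le (mul p p) (absv (mul p f)).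
  have := mul_monol p0 hyp.
  by rewrite vmulDr hpn addr0 (hom_abs (vmulBr p) (good_mulL _ p0)) hz.
set e := absv f - p.
have pe : le 0 (mul p e).
  rewrite /e vmulBr (hom_abs (vmulBr p) (good_mulL _ p0)).
  exact: (proj1 (le_subP _ _) hyp').
have pne : mul p (neg e) = 0.
  by rewrite (proj2 (hom_posneg (vmulBr p) (good_mulL e p0))) neg_id0.
have ne_p : le (neg e) p.
  apply: join_lub => //; rewrite /e opprB.
  by apply/le_subP; rewrite opprB addrC subrK; apply: abs_ge0.
have ne0 : neg e = 0 by apply: (nilL (neg_ge0 _) ne_p).
have pf : le p (absv f).
  apply/le_subP; rewrite -/e (pos_neg e) ne0 subr0; exact: pos_ge0.
set w := neg f.
have [hpw hwp] := disj_mul (pos_meet_neg f).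
have w0 : le 0 w := neg_ge0 f.
have wp_ww : le (mul w p) (mul w w).
  have := mul_monol w0 pf.
  by rewrite absE vmulDr hwp add0r.
have wf : mul w f = - mul w w.
  by rewrite {1}(pos_neg f) -/w vmulBr hwp sub0r.
have wpp : mul w (mul p p) = mul w p - mul w w.
  by apply: sub_eq_opp; rewrite -wf /f vmulBr.
have wpp0 : mul w (mul p p) = 0.
  apply: le_anti; last by apply: mul_pos => //; apply: sq_ge0.
  by rewrite wpp; apply: le_sub0.
have w_p : le w p.
  apply: join_lub => //; rewrite /f opprB.
  by apply/le_subP; rewrite opprB addrC subrK; apply: sq_ge0.
have k0 : mul w p = 0.
  apply: (nilR (v := mul p p)).
  - exact: mul_pos.
  - exact: mul_monor.
  by rewrite vmulA -(vmulA w p p) wpp0 vmul0l.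
have wz : w = 0 by apply: (nilR w0 w_p).
have f0 : le 0 f by rewrite (pos_neg f) -/w wz subr0; apply: pos_ge0.
rewrite abs_id // in pf.
have -> : mul p p - 2 *: p = f - p.
  by rewrite /f scaler_nat mulr2n opprD addrA.
exact: (proj1 (le_subP _ _) pf).
Qed.

Lemma main_pn p n : le 0 p -> le 0 n -> meet p n = 0 ->
  le (p + n) (absv (mul (p - n) (p - n) - (p - n))) ->
  exists a', (p - n) + a' = mul (p - n) a'.
Proof.
move=> p0 n0 hm hyp.
have [hpn hnp] := disj_mul hm.
have e1 : mul (p - n) (p - n) - (p - n) = (mul p p - p) + (mul n n + n).
  rewrite vmulBl !vmulBr hpn hnp subr0 sub0r opprK opprB.
  by rewrite [RHS]addrACA (addrC (- p)).
rewrite e1 in hyp.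
have hD := D_pos p0 n0 hpn hyp.
have hD1 : (1 : R) = -1 -> le 0 (mul n n - 2 *: n) by move=> h; exfalso; exact: one_neq_m1 h.
have [bn [hbn [bn0 bn4]]] := solve_exists n0 (or_introl erefl) hD1.
have [bp [hbp [bp0 bp4]]] := solve_exists p0 (or_intror erefl) (fun _ => hD).
have pbn : mul p bn = 0.
  apply: le_anti; last exact: mul_pos.
  by have := mul_monol p0 bn4; rewrite vmulZr hpn scaler0.
have nbp : mul n bp = 0.
  apply: le_anti; last exact: mul_pos.
  by have := mul_monol n0 bp4; rewrite vmulZr hnp scaler0.
have ep : mul p bp = p + bp.
  by rewrite -[X in _ = X + _]hbp scaleN1r (addrC (- bp)) subrK.
have en : mul n bn = n - bn.
  by rewrite -[X in _ = X - _]hbn scale1r (addrC bn) addrK.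
exists (bp + bn).
rewrite vmulDr !vmulBl ep en pbn nbp subr0 sub0r opprB.
by rewrite addrACA (addrC (- n)).
Qed.

Lemma main a : le (absv a) (absv (mul a a - a)) -> exists a', a + a' = mul a a'.
Proof.
move=> hyp; rewrite {1}absE in hyp.
have := main_pn (pos_ge0 a) (neg_ge0 a) (pos_meet_neg a).
by rewrite -(pos_neg a); apply.
Qed.

End VL.

Theorem theorem3 (R : realType) (V : lmodType R)
  (mul : V -> V -> V) (le : V -> V -> Prop) (join : V -> V -> V) :
  is_f_algebra mul le join ->
  archimedean le ->
  semiprime mul ->
  ru_complete le join ->
  forall a : V, le (absv join a) (absv join (mul a a - a)) ->
    exists a' : V, a + a' = mul a a'.
Proof.
move=> [[hA hDl hDr hZl hZr] [[hrefl hanti htrans] hadd hscale hjoin] hpos hfax].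
move=> harch hsemi hcomp a ha.
have ub1 : forall x y, le x (join x y) by move=> x y; case: (hjoin x y).
have ub2 : forall x y, le y (join x y) by move=> x y; case: (hjoin x y).
have lub : forall x y z, le x z -> le y z -> le (join x y) z.
  by move=> x y z; case: (hjoin x y) => _ _; apply.
exact: (@main R V le join hrefl hanti htrans hadd hscale ub1 ub2 lub harch
  mul hA hDl hDr hZl hZr hpos hfax hsemi hcomp a ha).
Qed.
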